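(* Fix $N\ge 1$, a statistic $c$ and a real $\theta>0$, and consider the weighted game of best choice. Let $A$ be the set of positive prefixes that are minimal with respect to prefix containment, i.e. positive prefixes $p$ such that no prefix $p'\neq p$ contained in $p$ is positive. Then every $\pi\in\mathfrak S_N$ is $p$-prefixed for exactly one $p\in A$, and the strategy ''accept candidate $i$ as soon as the current prefix flattening $\pi^{(i)}$ belongs to $A$'' maximizes the probability of winning among all strategies. The maximal winning probability equals $\bar S(1)$, where $1\in\mathfrak S_1$, and also equals $$\frac{\sum_{p\in A} D(p)\,S(p)}{\sum_{\sigma\in\mathfrak S_N}\theta^{c(\sigma)}}.$$
   Context: Permutations of $\{1,\dots,m\}$ are written in one-line notation $\pi=\pi_1\pi_2\cdots\pi_m$; $\mathfrak S_m$ is the set of all of them. An entry $\pi_j$ is a left-to-right maximum of $\pi$ if $\pi_j>\pi_i$ for all $i<j$. A statistic is a function $c:\bigcup_{m=1}^N\mathfrak S_m\to\mathbb Z_{\ge0}$. Fix $N\ge1$, a statistic $c$ and a real $\theta>0$. The weighted game of best choice is played as follows. A permutation $\pi\in\mathfrak S_N$ is chosen with probability $\theta^{c(\pi)}/\sum_{\sigma\in\mathfrak S_N}\theta^{c(\sigma)}$. For $i=1,\dots,N$, the player is shown the $i$-th prefix flattening $\pi^{(i)}$, which is the unique element of $\mathfrak S_i$ with the same relative order as $\pi_1,\dots,\pi_i$. Using only this information (note that $\pi^{(i)}$ determines $\pi^{(1)},\dots,\pi^{(i-1)}$), the player decides whether to accept candidate $i$, which ends the game, or to reject it. If candidates $1,\dots,N-1$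 are all rejected, candidate $N$ is accepted. The player wins iff the accepted candidate $i$ has $\pi_i=N$. A strategy is any such decision rule. A prefix is an element of $\bigcup_{m=1}^N\mathfrak S_m$. For $p\in\mathfrak S_m$ and $\pi\in\mathfrak S_N$: - $\pi$ is $p$-prefixed if $\pi^{(m)}=p$; - $\pi$ is $p$-winnable if $\pi$ is $p$-prefixed and $\pi_m=N$. A prefix $r\in\mathfrak S_n$ contains a prefix $p\in\mathfrak S_m$ ($m\le n$) if the $m$-th prefix flattening of $r$ equals $p$. Define: - $D(p)=\sum_{p\text{-prefixed }\pi}\theta^{c(\pi)}$; - the strike probability $S(p)=\big(\sum_{p\text{-winnable }\pi}\theta^{c(\pi)}\big)/D(p)$; - the open probability $S^{c}(p)$: it equals $0$ if $p\in\mathfrak S_N$, and for $p\in\mathfrak S_m$ with $m<N$ it equals $S^{c}(p)=\big(\sum_{q\in\mathfrak S_{m+1},\,q\text{ contains }p}D(q)\bar S(q)\big)/D(p)$; - the closed probability $\bar S(p)=\max(S(p),S^c(p))$. Equivalently, $S^c(p)$ (resp. $\bar S(p)$) is the largest conditional probability of winning, given that $\pi$ is $p$-prefixed, over strategies that reject candidates $1,\dots,m$ (resp. $1,\dots,m-1$). A prefix $p$ is positive if $S(p)\ge S^c(p)$, and negative otherwise. *)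

(* Defs.v *)
From HB Require Import structures.
From mathcomp Require Import all_boot all_order all_algebra.
Set Implicit Arguments. Unset Strict Implicit. Unset Printing Implicit Defensive.
Import Order.TTheory GRing.Theory Num.Theory.
Local Open Scope ring_scope.

(* Permutations of {1,...,m} are represented in one-line notation as
   sequences of naturals; S_m is enumerated (without duplicates) by
   [Sm m := permutations (iota 1 m)]. *)
Definition Sm (m : nat) : seq (seq nat) := permutations (iota 1 m).

Definition flat (s : seq nat) : seq nat :=
  map (fun x => count (fun y => (y <= x)%N) s) s.

Definition pref (i : nat) (pi : seq nat) : seq nat := flat (take i pi).

Definition contains (r p : seq nat) : bool :=
  (size p <= size r)%N && (pref (size p) r == p).

Section Game.
Context {R : realFieldType} (N : nat) (c : seq nat -> nat) (theta : R).

Definition is_prefix (p : seq nat) : bool :=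
  [&& (1 <= size p)%N, (size p <= N)%N & p \in Sm (size p)].

Definition weight (pi : seq nat) : R := theta ^+ c pi.

Definition prefixed (p pi : seq nat) : bool := pref (size p) pi == p.
Definition winnable (p pi : seq nat) : bool :=
  prefixed p pi && (nth 0%N pi (size p).-1 == N).

Definition D (p : seq nat) : R := \sum_(pi <- Sm N | prefixed p pi) weight pi.

Definition Sstrike (p : seq nat) : R :=
  (\sum_(pi <- Sm N | winnable p pi) weight pi) / D p.

Fixpoint Sc_rec (k : nat) (p : seq nat) : R :=
  match k with
  | 0%N => 0
  | k'.+1 => (\sum_(q <- Sm (size p).+1 | contains q p)
                D q * Num.max (Sstrike q) (Sc_rec k' q)) / D p
  end.

Definition Sopen (p : seq nat) : R := Sc_rec (N - size p) p.
Definition Sclosed (p : seq nat) : R := Num.max (Sstrike p) (Sopen p).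

Definition positive (p : seq nat) : bool := Sopen p <= Sstrike p.

Definition inA (p : seq nat) : bool :=
  is_prefix p && positive p &&
  ~~ has (fun m => has (fun p' => contains p p' && (p' != p) && positive p')
                       (Sm m)) (iota 1 N).

(* A strategy: decision (accept = true) as a function of the current prefix
   flattening pi^(i).  The accepted candidate is the first i in 1..N-1 with
   tau (pi^(i)) = true, and N if there is none. *)
Definition accepted (tau : seq nat -> bool) (pi : seq nat) : nat :=
  (find (fun i => (N <= i)%N || tau (pref i pi)) (iota 1 N)).+1.

Definition wins (tau : seq nat -> bool) (pi : seq nat) : bool :=
  nth 0%N pi (accepted tau pi).-1 == N.

Definition Ztot : R := \sum_(pi <- Sm N) weight pi.

Definition win_prob (tau : seq nat -> bool) : R :=
  (\sum_(pi <- Sm N | wins tau pi) weight pi) / Ztot.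

End Game.

(* Main.v *)
Require Import Defs.
From HB Require Import structures.
From mathcomp Require Import all_boot all_order all_algebra.
Import Order.TTheory GRing.Theory Num.Theory.

Lemma count_le_lt (t : seq nat) x y : x < y -> y \in t ->
  count (fun z => z <= x) t < count (fun z => z <= y) t.
Proof.
elim: t => [|z t IH] //= xy; rewrite inE => /orP [/eqP <-|yt].
  rewrite leqnn (leqNgt y x) xy /= add0n add1n ltnS.
  by apply: sub_count => w /= wx; apply: leq_trans wx (ltnW xy).
rewrite -addnS; apply: leq_add; last exact: IH.
by case zx: (z <= x) => //; rewrite (leq_trans zx (ltnW xy)).
Qed.

Lemma flat_mono {t : seq nat} {x y} : x \in t -> y \in t ->
  (count (fun z => z <= y) t <= count (fun z => z <= x) t) = (y <= x).
Proof.
move=> xt yt; case: (leqP y x) => yx.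
  by apply: sub_count => w /= wy; apply: leq_trans wy yx.
by rewrite leqNgt count_le_lt.
Qed.

Lemma flat_map_mono (f : nat -> nat) (u : seq nat) :
  {in u &, forall x y, (f y <= f x) = (y <= x)} -> flat (map f u) = flat u.
Proof.
move=> H; rewrite /flat -map_comp; apply/eq_in_map => x xu /=.
rewrite count_map; apply: eq_in_count => y yu /=; exact: H.
Qed.

Lemma pref_pref k n s : k <= n -> pref k (pref n s) = pref k s.
Proof.
move=> kn; rewrite /pref /flat -map_take -(take_takel s kn).
set t := take n s.
have := @flat_map_mono (fun x => count (fun y => y <= x) t) (take k t).
rewrite /flat => -> //.
move=> x y /mem_take xt /mem_take yt; exact: flat_mono.
Qed.

Lemma size_flat s : size (flat s) = size s.
Proof. by rewrite /flat size_map. Qed.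

Lemma size_pref k s : k <= size s -> size (pref k s) = k.
Proof. by move=> ks; rewrite /pref size_flat size_takel. Qed.

Lemma size_Sm {m q} : q \in Sm m -> size q = m.
Proof. by rewrite /Sm mem_permutations => /perm_size ->; rewrite size_iota. Qed.

Lemma flat_Sm {u : seq nat} : uniq u -> flat u \in Sm (size u).
Proof.
move=> uu; rewrite /Sm mem_permutations.
set f := fun x => count (fun y => y <= x) u.
have finj : {in u &, injective f}.
  move=> x y xu yu fxy; apply/eqP; rewrite eqn_leq.
  by rewrite -(flat_mono xu yu) -(flat_mono yu xu); move: fxy; rewrite /f => ->; rewrite !leqnn.
have uf : uniq (flat u) by rewrite /flat map_inj_in_uniq.
have sub : {subset flat u <= iota 1 (size u)}.
  move=> z /mapP [x xu ->]; rewrite mem_iota add1n ltnS count_size andbT.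
  by rewrite -has_count; apply/hasP; exists x.
have [|_ eq] := uniq_min_size uf sub; first by rewrite size_iota size_flat.
by apply: uniq_perm => //; apply: iota_uniq.
Qed.

Lemma pref_Sm {N pi k} : pi \in Sm N -> k <= N -> pref k pi \in Sm k.
Proof.
move=> piS kN; have spi := size_Sm piS.
have uu : uniq (take k pi).
  apply: take_uniq; move: piS; rewrite /Sm mem_permutations => /perm_uniq ->.
  exact: iota_uniq.
by have := flat_Sm uu; rewrite size_takel // spi.
Qed.

Lemma Sm_uniq m : uniq (Sm m).
Proof. exact: permutations_uniq. Qed.

Lemma iota_Sm m : iota 1 m \in Sm m.
Proof. by rewrite /Sm mem_permutations perm_refl. Qed.

Lemma pref1 {N pi} : 1 <= N -> pi \in Sm N -> prefixed [:: 1] pi.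
Proof.
move=> hN /size_Sm; case: pi => [|x s] /= E; first by rewrite -E in hN.
by rewrite /prefixed /pref /flat /= leqnn take0.
Qed.

Local Open Scope ring_scope.

Lemma find_nthP (T : Type) (x0 : T) (a : pred T) (s : seq T) (k : nat) :
  (k < size s)%N -> a (nth x0 s k) ->
  (forall j, (j < k)%N -> ~~ a (nth x0 s j)) -> find a s = k.
Proof.
elim: s k => [|x s IH] [|k] //= ks ak H.
  by rewrite ak.
have := H 0%N isT; rewrite /= => /negbTE ->; congr S; apply: IH => // j jk.
exact: (H j.+1).
Qed.

Section Game.
Context {R : realFieldType} (N : nat) (c : seq nat -> nat) (theta : R)
  (hN : (1 <= N)%N) (htheta : 0 < theta).

Local Notation w := (weight c theta).
Local Notation DD := (D N c theta).
Local Notation SS := (Sstrike N c theta).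
Local Notation SO := (Sopen N c theta).
Local Notation SC := (Sclosed N c theta).
Local Notation pos := (positive N c theta).

Definition X (p : seq nat) : R := \sum_(pi <- Sm N | winnable N p pi) w pi.

Definition af (tau : seq nat -> bool) (m : nat) (pi : seq nat) : nat :=
  (m + find (fun i => (N <= i)%N || tau (pref i pi)) (iota m (N.+1 - m)))%N.

Definition V (tau : seq nat -> bool) (p : seq nat) : R :=
  \sum_(pi <- Sm N | prefixed p pi && (nth 0%N pi (af tau (size p) pi).-1 == N)) w pi.

Lemma w_gt0 pi : 0 < w pi.
Proof. exact: exprn_gt0. Qed.

Lemma w_ge0 pi : 0 <= w pi.
Proof. exact: ltW (w_gt0 pi). Qed.

Lemma D_ge0 p : 0 <= DD p.
Proof. by apply: sumr_ge0 => pi _; apply: w_ge0. Qed.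

Lemma SS_ge0 p : 0 <= SS p.
Proof. by apply: divr_ge0; [apply: sumr_ge0 => pi _; apply: w_ge0|apply: D_ge0]. Qed.

Lemma X_le_D p : X p <= DD p.
Proof.
rewrite /X /D big_mkcond [X in _ <= X]big_mkcond; apply: ler_sum => pi _.
rewrite /winnable; case: (prefixed p pi) => //=; case: ifP => _ //; exact: w_ge0.
Qed.

Lemma V_le_D tau p : V tau p <= DD p.
Proof.
rewrite /V /D big_mkcond [X in _ <= X]big_mkcond; apply: ler_sum => pi _.
case: (prefixed p pi) => //=; case: ifP => _ //; exact: w_ge0.
Qed.

Lemma V_ge0 tau p : 0 <= V tau p.
Proof. by apply: sumr_ge0 => pi _; apply: w_ge0. Qed.

Lemma DS p : DD p * SS p = X p.
Proof.
rewrite /Sstrike -/(X p).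
have [D0|Dn0] := eqVneq (DD p) 0; last by rewrite mulrC divfK.
rewrite D0 mul0r; apply: le_anti; have := X_le_D p; rewrite D0 => -> /=; rewrite /X.
rewrite andbT; by apply: sumr_ge0 => pi _; apply: w_ge0.
Qed.

Lemma pos_N p : size p = N -> pos p.
Proof. by move=> sp; rewrite /positive /Sopen sp subnn /= SS_ge0. Qed.

Lemma af_N tau pi : af tau N pi = N.
Proof. by rewrite /af subSnn /= leqnn addn0. Qed.

Lemma af_S tau m pi : (m < N)%N ->
  af tau m pi = if tau (pref m pi) then m else af tau m.+1 pi.
Proof.
move=> mN; rewrite /af subSS subSn ?(ltnW mN) //= (leqNgt N m) mN /=.
by case: (tau _); rewrite ?addn0 ?addSnnS.
Qed.

Lemma accepted_af tau pi : accepted N tau pi = af tau 1 pi.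
Proof. by rewrite /accepted /af subn1 /= add1n. Qed.

Lemma V_stop (tau : seq nat -> bool) p : (size p <= N)%N -> (size p = N \/ tau p) -> V tau p = X p.
Proof.
move=> sp H; rewrite /V /X; apply: eq_bigl => pi; rewrite /winnable.
case Hp: (prefixed p pi) => //=.
suff -> : af tau (size p) pi = size p by [].
move: sp; rewrite leq_eqVlt => /orP [/eqP E|lt]; first by rewrite E af_N.
rewrite af_S // (eqP Hp); case: H => [E|-> //].
by move: lt; rewrite E ltnn.
Qed.

Lemma sum_pred1 (T : eqType) (r : seq T) (y : T) (a : R) : uniq r ->
  \sum_(x <- r) (if x == y then a else 0) = if y \in r then a else 0.
Proof.
move=> ur; case yr: (y \in r).
  rewrite (bigD1_seq y) //= eqxx big1_seq ?addr0 // => x /andP [xy _].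
  by rewrite (negbTE xy).
by rewrite big1_seq // => x /andP [_ xr]; case: eqP => // E; rewrite -E xr in yr.
Qed.

Lemma part p (F : pred (seq nat)) (G : seq nat -> R) : (size p < N)%N ->
  \sum_(pi <- Sm N | prefixed p pi && F pi) G pi =
  \sum_(q <- Sm (size p).+1 | contains q p)
     \sum_(pi <- Sm N | prefixed q pi && F pi) G pi.
Proof.
move=> sp.
rewrite [RHS](eq_bigr (fun q => \sum_(pi <- Sm N) (if prefixed q pi && F pi then G pi else 0))); last by move=> q _; rewrite big_mkcond.
rewrite exchange_big /= big_mkcond big_seq [RHS]big_seq; apply: eq_bigr => pi piS.
have spi := size_Sm piS.
set q0 := pref (size p).+1 pi.
have q0S : q0 \in Sm (size p).+1 by apply: pref_Sm piS sp.
have sq0 : size q0 = (size p).+1 by rewrite size_pref // spi.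
rewrite big_mkcond /=.
rewrite (bigD1_seq q0) //=; last exact: Sm_uniq.
rewrite big1_seq ?addr0; last first.
  move=> q /andP [qq0 qS]; rewrite /prefixed (size_Sm qS) -/q0.
  by rewrite eq_sym (negbTE qq0) /=; case: ifP.
have -> : prefixed q0 pi by rewrite /prefixed sq0.
have -> : contains q0 p = prefixed p pi.
  by rewrite /contains sq0 leqnSn /= /q0 pref_pref.
by case: (prefixed p pi).
Qed.

Lemma V_go tau p : (size p < N)%N -> ~~ tau p ->
  V tau p = \sum_(q <- Sm (size p).+1 | contains q p) V tau q.
Proof.
move=> sp tp.
have -> : V tau p = \sum_(pi <- Sm N | prefixed p pi &&
           (nth 0%N pi (af tau (size p).+1 pi).-1 == N)) w pi.
  apply: eq_bigl => pi; case Hp: (prefixed p pi) => //=.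
  by rewrite af_S // (eqP Hp) (negbTE tp).
rewrite part // big_seq_cond [RHS]big_seq_cond; apply: eq_bigr => q /andP [qS _].
by rewrite /V (size_Sm qS).
Qed.

Lemma Sopen_rec p : (size p < N)%N -> DD p != 0 ->
  DD p * SO p = \sum_(q <- Sm (size p).+1 | contains q p) DD q * SC q.
Proof.
move=> sp Dn0; rewrite /Sopen.
have [k Ek] : exists k, (N - size p = k.+1)%N.
  by exists (N - size p).-1; rewrite prednK // subn_gt0.
rewrite Ek /= mulrC divfK //.
rewrite big_seq_cond [RHS]big_seq_cond; apply: eq_bigr => q /andP [qS _].
by rewrite /Sclosed /Sopen (size_Sm qS) subnS Ek.
Qed.

Lemma opt tau k : forall p, (size p + k = N)%N -> V tau p <= DD p * SC p.
Proof.
elim: k => [|k IH] p sp.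
  rewrite addn0 in sp; rewrite V_stop ?sp //; last by left.
  by rewrite -DS ler_wpM2l ?D_ge0 // /Sclosed le_max lexx.
have spN : (size p < N)%N by rewrite -sp addnS ltnS leq_addr.
have [D0|Dn0] := eqVneq (DD p) 0.
  by rewrite D0 mul0r -D0 V_le_D.
case tp: (tau p).
  rewrite V_stop ?(ltnW spN) //; last by right.
  by rewrite -DS ler_wpM2l ?D_ge0 // /Sclosed le_max lexx.
rewrite V_go ?tp //.
apply: (@le_trans _ _ (\sum_(q <- Sm (size p).+1 | contains q p) DD q * SC q)).
  rewrite big_seq_cond [X in _ <= X]big_seq_cond; apply: ler_sum => q /andP [qS _].
  by apply: IH; rewrite (size_Sm qS) addSnnS.
by rewrite -Sopen_rec // ler_wpM2l ?D_ge0 // /Sclosed le_max lexx orbT.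
Qed.

Lemma opt_eq k : forall p, (size p + k = N)%N -> V pos p = DD p * SC p.
Proof.
elim: k => [|k IH] p sp.
  rewrite addn0 in sp; rewrite V_stop ?sp //; last by left.
  by rewrite -DS /Sclosed max_l //; exact: pos_N.
have spN : (size p < N)%N by rewrite -sp addnS ltnS leq_addr.
have [D0|Dn0] := eqVneq (DD p) 0.
  rewrite D0 mul0r; apply: le_anti; rewrite V_ge0 andbT -D0; exact: V_le_D.
case tp: (pos p).
  rewrite V_stop ?(ltnW spN) //; last by right.
  by rewrite -DS /Sclosed max_l.
rewrite V_go ?tp // /Sclosed max_r; last by rewrite ltW // ltNge; move: tp; rewrite /positive => ->.
rewrite Sopen_rec // big_seq_cond [RHS]big_seq_cond; apply: eq_bigr => q /andP [qS _].
by apply: IH; rewrite (size_Sm qS) addSnnS.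
Qed.

Local Notation A := (inA N c theta).

Lemma Ztot_D1 : Ztot N c theta = DD [:: 1%N].
Proof.
rewrite /Ztot /D big_seq_cond [RHS]big_seq_cond; apply: eq_bigl => pi /=.
rewrite andbT; case: (boolP (pi \in Sm N)) => //= piS; by rewrite (pref1 hN piS).
Qed.

Lemma win_V tau : \sum_(pi <- Sm N | wins N tau pi) w pi = V tau [:: 1%N].
Proof.
rewrite /V big_seq_cond [RHS]big_seq_cond; apply: eq_bigl => pi /=.
case: (boolP (pi \in Sm N)) => //= piS; by rewrite (pref1 hN piS) /wins accepted_af.
Qed.

Lemma Ztot_gt0 : 0 < Ztot N c theta.
Proof.
rewrite /Ztot (bigD1_seq (iota 1 N)) /=; [|exact: iota_Sm|exact: Sm_uniq].
apply: (lt_le_trans (w_gt0 (iota 1 N))); rewrite lerDl.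
by apply: sumr_ge0 => pi _; apply: w_ge0.
Qed.

Lemma size1N : (size [:: 1%N] + (N - 1) = N)%N.
Proof. by rewrite /= add1n subn1 prednK. Qed.

Lemma win_le tau : win_prob N c theta tau <= SC [:: 1%N].
Proof.
rewrite /win_prob win_V ler_pdivrMr ?Ztot_gt0 // Ztot_D1 mulrC.
exact: (opt tau (N - 1) _ size1N).
Qed.

Lemma win_pos : win_prob N c theta pos = SC [:: 1%N].
Proof.
rewrite /win_prob win_V (opt_eq (N - 1) _ size1N) -Ztot_D1 mulrC mulKf //.
by rewrite gt_eqF // Ztot_gt0.
Qed.

Lemma inA_pref pi i : pi \in Sm N -> (1 <= i <= N)%N ->
  A (pref i pi) = pos (pref i pi) && ~~ has (fun j => pos (pref j pi)) (iota 1 i.-1).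
Proof.
move=> piS /andP [i1 iN]; have spi := size_Sm piS.
have sp : size (pref i pi) = i by rewrite size_pref // spi.
rewrite /inA /is_prefix sp i1 iN (pref_Sm piS iN) /=.
congr (_ && ~~ _); apply/hasP/hasP.
  move=> [m mI /hasP [p' p'S /andP [/andP [cont neq] posp']]].
  have sp' := size_Sm p'S.
  move: cont; rewrite /contains sp sp' => /andP [mi /eqP E].
  rewrite pref_pref // in E.
  have mni : m != i by apply: contraNneq neq => mi'; rewrite -E mi'.
  exists m; last by rewrite E.
  move: mI; rewrite !mem_iota => /andP [-> _] /=.
  by rewrite add1n prednK // ltn_neqAle mni.
move=> [j jI posj]; move: jI; rewrite mem_iota add1n prednK // => /andP [j1 ji].
exists j; first by rewrite mem_iota j1 add1n ltnS (leq_trans (ltnW ji) iN).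
apply/hasP; exists (pref j pi); first by apply: pref_Sm piS (leq_trans (ltnW ji) iN).
rewrite posj andbT /contains size_pref ?spi ?(leq_trans (ltnW ji) iN) // sp (ltnW ji).
rewrite pref_pref ?(ltnW ji) // eqxx /=.
apply/eqP => E; have := congr1 size E.
by rewrite size_pref ?spi ?(leq_trans (ltnW ji) iN) // sp => jE; rewrite jE ltnn in ji.
Qed.

Lemma first_pos pi : pi \in Sm N -> exists i0,
  [/\ (1 <= i0 <= N)%N, pos (pref i0 pi) &
      forall j, (1 <= j < i0)%N -> ~~ pos (pref j pi)].
Proof.
move=> piS; have spi := size_Sm piS.
have ex : exists m, (1 <= m <= N)%N && pos (pref m pi).
  by exists N; rewrite hN leqnn pos_N // size_pref // spi.
case: (ex_minnP ex) => m /andP [mr mpos] mmin.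
exists m; split => // j /andP [j1 jm]; apply/negP => pj.
have := mmin j; rewrite j1 pj (leq_trans (ltnW jm)) ?(andP mr).2 //= => /(_ isT).
by rewrite leqNgt jm.
Qed.

Lemma inA_iff pi i0 i : pi \in Sm N ->
  [/\ (1 <= i0 <= N)%N, pos (pref i0 pi) &
      forall j, (1 <= j < i0)%N -> ~~ pos (pref j pi)] ->
  (1 <= i <= N)%N -> A (pref i pi) = (i == i0).
Proof.
move=> piS [i0r i0p i0m] ir; rewrite inA_pref //.
case: (ltngtP i i0) => [lt|gt|->].
- by rewrite (negbTE (i0m i _)) // (andP ir).1 lt.
- apply/negbTE; rewrite negb_and negbK; apply/orP; right.
  apply/hasP; exists i0 => //.
  by rewrite mem_iota (andP i0r).1 add1n prednK // (leq_trans _ gt).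
- rewrite i0p /=; apply/hasPn => j; rewrite mem_iota add1n prednK ?(andP i0r).1 //.
  exact: i0m.
Qed.

Lemma acc_i0 pi i0 (tau : seq nat -> bool) : pi \in Sm N ->
  [/\ (1 <= i0 <= N)%N, pos (pref i0 pi) &
      forall j, (1 <= j < i0)%N -> ~~ pos (pref j pi)] ->
  ((N <= i0)%N || tau (pref i0 pi)) ->
  (forall j, (1 <= j < i0)%N -> ~~ tau (pref j pi)) ->
  accepted N tau pi = i0.
Proof.
move=> piS [/andP [i01 i0N] _ _] ta tb.
rewrite /accepted (@find_nthP _ 0%N _ _ i0.-1); first by rewrite prednK.
- by rewrite size_iota prednK.
- by rewrite nth_iota ?add1n ?prednK.
move=> j ji; rewrite nth_iota; last by rewrite (leq_trans ji) // (leq_trans (leq_pred _) i0N).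
rewrite negb_or -ltnNge add1n; move: ji; rewrite -ltnS prednK // => ji.
by rewrite (leq_trans ji) // tb // ji.
Qed.

Lemma acc_A_pos pi : pi \in Sm N -> exists i0,
  [/\ (1 <= i0 <= N)%N, forall i, (1 <= i <= N)%N -> A (pref i pi) = (i == i0),
      accepted N A pi = i0 & accepted N pos pi = i0].
Proof.
move=> piS; have [i0 spec] := first_pos pi piS; exists i0.
have [i0r i0p i0m] := spec.
have iff := fun i => @inA_iff pi i0 i piS spec.
split => //.
- apply: acc_i0 => //; first by rewrite iff // eqxx orbT.
  move=> j /andP [j1 ji]; rewrite iff ?j1 ?(leq_trans (ltnW ji)) ?(andP i0r).2 //.
  by rewrite neq_ltn ji.
- by apply: acc_i0 => //; rewrite i0p orbT.
Qed.

Lemma win_A : win_prob N c theta A = win_prob N c theta pos.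
Proof.
rewrite /win_prob big_seq_cond [X in _ = X / _]big_seq_cond; congr (_ / _).
apply: eq_bigl => pi /=; case: (boolP (pi \in Sm N)) => //= piS.
by rewrite /wins; have [i0 [_ _ -> ->]] := acc_A_pos pi piS.
Qed.

Lemma unique_A pi : pi \in Sm N -> exists! p, A p /\ prefixed p pi.
Proof.
move=> piS; have [i0 [i0r iff _ _]] := acc_A_pos pi piS.
have spi := size_Sm piS.
exists (pref i0 pi); split.
  by rewrite iff // eqxx /prefixed size_pref ?spi ?(andP i0r).2.
move=> p' [Ap' pp'].
have : is_prefix N p' by move: Ap'; rewrite /inA => /andP [/andP [-> _] _].
rewrite /is_prefix => /and3P [s1 sN _].
move: pp' Ap'; rewrite /prefixed => /eqP <-; rewrite iff ?s1 // => /eqP ->.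
by [].
Qed.

Lemma sum_A :
  \sum_(pi <- Sm N | wins N A pi) w pi =
  \sum_(m <- iota 1 N) \sum_(p <- Sm m | A p) DD p * SS p.
Proof.
have E : forall m, \sum_(p <- Sm m | A p) DD p * SS p =
   \sum_(p <- Sm m) \sum_(pi <- Sm N) (if A p && winnable N p pi then w pi else 0).
  move=> m; rewrite big_mkcond; apply: eq_bigr => p _; rewrite DS /X.
  by case: (A p) => /=; [rewrite big_mkcond|rewrite big1].
under [RHS]eq_bigr do rewrite E exchange_big.
rewrite [RHS]exchange_big /= big_mkcond big_seq [RHS]big_seq.
apply: eq_bigr => pi piS.
have [i0 [i0r iff acc _]] := acc_A_pos pi piS.
have spi := size_Sm piS.
set q0 := pref i0 pi.
have sq0 : size q0 = i0 by rewrite size_pref ?spi ?(andP i0r).2.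
have key : forall p, (A p && prefixed p pi) = (p == q0).
  move=> p; apply/andP/eqP.
    move=> [Ap pp].
    have : is_prefix N p by move: Ap; rewrite /inA => /andP [/andP [-> _] _].
    rewrite /is_prefix => /and3P [s1 sN _].
    move: pp Ap; rewrite /prefixed => /eqP <-; rewrite iff ?s1 // => /eqP ->.
    by [].
  move=> ->; split; first by rewrite iff // eqxx.
  by rewrite /prefixed sq0.
have inner : forall m, \sum_(p <- Sm m) (if A p && winnable N p pi then w pi else 0)
   = if q0 \in Sm m then (if nth 0%N pi i0.-1 == N then w pi else 0) else 0.
  move=> m; rewrite -sum_pred1 ?Sm_uniq //; apply: eq_big_seq => p pS.
  rewrite /winnable andbA key; case: eqP => // ->; by rewrite sq0.
under eq_bigr do rewrite inner.
have memq : forall m, (q0 \in Sm m) = (m == i0).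
  move=> m; apply/idP/eqP => [/size_Sm|->]; first by rewrite sq0.
  exact: pref_Sm piS (andP i0r).2.
under eq_bigr do rewrite memq.
rewrite sum_pred1 ?iota_uniq // mem_iota (andP i0r).1 add1n ltnS (andP i0r).2 /=.
by rewrite /wins acc.
Qed.

End Game.

Theorem mainTheorem1 (R : realFieldType) (N : nat) (c : seq nat -> nat)
    (theta : R) (hN : (1 <= N)%N) (htheta : 0 < theta) :
  (forall pi, pi \in Sm N ->
     exists! p, inA N c theta p /\ prefixed p pi) /\
  (forall tau : seq nat -> bool,
     win_prob N c theta tau <= win_prob N c theta (inA N c theta)) /\
  win_prob N c theta (inA N c theta) = Sclosed N c theta [:: 1%N] /\
  win_prob N c theta (inA N c theta) =
    (\sum_(m <- iota 1 N) \sum_(p <- Sm m | inA N c theta p)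
        D N c theta p * Sstrike N c theta p) / Ztot N c theta.
Proof.
split; first by move=> pi piS; apply: unique_A.
split; first by move=> tau; rewrite win_A // win_pos //; apply: win_le.
split; first by rewrite win_A // win_pos.
by rewrite /win_prob sum_A.
Qed.
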